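(* Let $\mathcal{M}_{\hat A'\hat B'\to\hat A\hat B}$ be a bipartite quantum channel and let $\Theta^{\mathrm{PPT}}$ be a completely-PPT-preserving superchannel, i.e. $\Theta^{\mathrm{PPT}}(\mathcal{M})=\mathcal{P}^{\mathrm{post}}_{A_M\hat A\hat BB_M\to AB}\circ\mathcal{M}_{\hat A'\hat B'\to\hat A\hat B}\circ\mathcal{P}^{\mathrm{pre}}_{A'B'\to\hat A'\hat B'A_MB_M}$ for completely PPT-preserving channels $\mathcal{P}^{\mathrm{pre}},\mathcal{P}^{\mathrm{post}}$. Then $$E_N(\mathcal{M})\ge E_N(\Theta^{\mathrm{PPT}}(\mathcal{M})).$$
   Context: $T_X$ denotes partial transpose on system $X$. The diamond norm of a Hermitian-preserving map $\mathcal{P}_{C\to D}$ is $\sup_\psi\|(\mathrm{id}_R\otimes\mathcal{P})(\psi_{RC})\|_1$ over pure states. For a bipartite map $\mathcal{N}_{A'B'\to AB}$ (Alice: $A',A$; Bob: $B',B$), $E_N(\mathcal{N})=\log\|T_B\circ\mathcal{N}\circ T_{B'}\|_\diamond$. A bipartite channel is completely PPT-preserving if conjugating it by partial transposes on Bob's input and output systems yields a completely positive map. In the superchannel, Alice holds $A',\hat A',A_M,\hat A,A$ and Bob holds $B',\hat B',B_M,\hat B,B$. *)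

(* Defs.v *)
From HB Require Import structures.
From mathcomp Require Import all_boot all_order all_algebra.
Set Implicit Arguments. Unset Strict Implicit. Unset Printing Implicit Defensive.
Import Order.TTheory GRing.Theory Num.Theory.
Local Open Scope ring_scope.

Section QI.
Variable C : numClosedFieldType.

Definition Op (I : finType) := 'M[C]_#|I|.
Arguments Op I%_type_scope.

Definition opE (I : finType) (X : Op I) (i j : I) : C :=
  X (enum_rank i) (enum_rank j).

Definition mkop (I : finType) (f : I -> I -> C) : Op I :=
  \matrix_(k, l) f (enum_val k) (enum_val l).

Definition adj m n (X : 'M[C]_(m, n)) : 'M[C]_(n, m) := (map_mx Num.conj X)^T.

Definition psd n (X : 'M[C]_n) : Prop :=
  forall v : 'cV[C]_n, 0 <= (adj v *m X *m v) 0 0.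

(* id_R (x) f, acting on operators on R (x) I (reference system first) *)
Definition idtensor (R I J : finType) (f : Op I -> Op J) (X : Op (R * I)) :
    Op (R * J) :=
  mkop (fun p q : R * J =>
    opE (f (mkop (fun i i' : I => opE X (p.1, i) (q.1, i')))) p.2 q.2).

Definition CP (I J : finType) (f : Op I -> Op J) : Prop :=
  forall (R : finType) (X : Op (R * I)), psd X -> psd (idtensor f X).

Definition TP (I J : finType) (f : Op I -> Op J) : Prop :=
  forall X : Op I, \tr (f X) = \tr X.

Definition channel (I J : finType) (f : Op I -> Op J) : Prop :=
  linear f /\ CP f /\ TP f.

Definition ptB (IA IB : finType) (X : Op (IA * IB)) : Op (IA * IB) :=
  mkop (fun p q : IA * IB => opE X (p.1, q.2) (q.1, p.2)).

(* completely PPT-preserving bipartite channel (Alice = first factor,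
   Bob = second factor of input and output) *)
Definition PPTchannel (IA IB JA JB : finType)
    (f : Op (IA * IB) -> Op (JA * JB)) : Prop :=
  channel f /\ CP (fun X => ptB (f (ptB X))).

Definition eigvals n (A : 'M[C]_n) : seq C :=
  sval (closed_field_poly_normal (char_poly A)).

(* trace norm = sum of singular values = Tr sqrt(X^* X) *)
Definition tnorm n (X : 'M[C]_n) : C :=
  \sum_(z <- eigvals (adj X *m X)) sqrtC z.

(* b is an upper bound for { || (id_R (x) P)(psi_RC) ||_1 : psi pure },
   i.e. ||P||_diamond <= b *)
Definition diamond_le (I J : finType) (P : Op I -> Op J) (b : C) : Prop :=
  forall (R : finType) (v : 'cV[C]_#|{: (R * I)%type}|),
    adj v *m v = 1%:M -> tnorm (idtensor P (v *m adj v)) <= b.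

(* E_N(N) <= E_N(N') , i.e. log ||T_B o N o T_B'||_diamond <=
   log ||T_B o N' o T_B'||_diamond, stated as inequality of the suprema
   (every upper bound of the second set bounds the first set). *)
Definition EN_le (IA IB JA JB IA' IB' JA' JB' : finType)
    (N : Op (IA * IB) -> Op (JA * JB))
    (N' : Op (IA' * IB') -> Op (JA' * JB')) : Prop :=
  forall b : C, diamond_le (fun X => ptB (N' (ptB X))) b ->
                diamond_le (fun X => ptB (N (ptB X))) b.

(* (M (x) id_{A_M B_M}) acting on the output of the pre-processing,
   with systems ordered (Ah' A_M)(Bh' B_M) -> (A_M Ah)(Bh B_M). *)
Definition applyM (hA' hB' hA hB AM BM : finType)
    (M : Op (hA' * hB') -> Op (hA * hB))
    (X : Op ((hA' * AM) * (hB' * BM))) : Op ((AM * hA) * (hB * BM)) :=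
  mkop (fun p q : (AM * hA) * (hB * BM) =>
    let am := p.1.1 in let a := p.1.2 in let b := p.2.1 in let bm := p.2.2 in
    let am' := q.1.1 in let a' := q.1.2 in let b' := q.2.1 in let bm' := q.2.2 in
    opE (M (mkop (fun x y : hA' * hB' =>
                    opE X ((x.1, am), (x.2, bm)) ((y.1, am'), (y.2, bm')))))
        (a, b) (a', b')).

Definition superchannel (A' B' hA' hB' AM BM hA hB A B : finType)
    (Ppre : Op (A' * B') -> Op ((hA' * AM) * (hB' * BM)))
    (Ppost : Op ((AM * hA) * (hB * BM)) -> Op (A * B))
    (M : Op (hA' * hB') -> Op (hA * hB)) : Op (A' * B') -> Op (A * B) :=
  fun X => Ppost (applyM M (Ppre X)).

End QI.
Arguments Op C I%_type_scope.

(* Main.v *)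
Require Import Defs.
From HB Require Import structures.
From mathcomp Require Import all_boot all_order all_algebra.
From mathcomp Require Import sesquilinear spectral.
From mathcomp Require Import ring.
Set Implicit Arguments. Unset Strict Implicit. Unset Printing Implicit Defensive.
Import Order.TTheory GRing.Theory Num.Theory.
Local Open Scope ring_scope.
Local Open Scope sesquilinear_scope.

Section Main.
Variable C : numClosedFieldType.

Lemma opE_mkop (I : finType) (f : I -> I -> C) i j : opE (mkop f) i j = f i j.
Proof. by rewrite /opE /mkop mxE !enum_rankK. Qed.

Lemma mkop_opE (I : finType) (X : Op C I) : mkop (opE X) = X.
Proof. by apply/matrixP => k l; rewrite /opE /mkop mxE !enum_valK. Qed.

Lemma op_ext (I : finType) (X Y : Op C I) :
  (forall i j, opE X i j = opE Y i j) -> X = Y.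
Proof. by move=> H; rewrite -(mkop_opE X) -(mkop_opE Y); apply/matrixP=> k l; rewrite !mxE H. Qed.

Lemma big_ordI (I : finType) (F : I -> C) :
  \sum_(k < #|I|) F (enum_val k) = \sum_i F i.
Proof.
by rewrite (reindex (@enum_rank I)) /=; [apply: eq_bigr => i _; rewrite enum_rankK|
  exists (@enum_val _ _) => x _; [exact: enum_rankK | exact: enum_valK]].
Qed.

Lemma trE (I : finType) (X : Op C I) : \tr X = \sum_i opE X i i.
Proof.
rewrite /mxtrace -big_ordI; apply: eq_bigr => k _; by rewrite /opE enum_valK.
Qed.

Definition blk (R I : finType) (X : Op C (R * I)) (r r' : R) : Op C I :=
  mkop (fun i i' => opE X (r, i) (r', i')).

Lemma opE_blk (R I : finType) (X : Op C (R * I)) r r' i i' :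
  opE (blk X r r') i i' = opE X (r, i) (r', i').
Proof. exact: opE_mkop. Qed.

Lemma opE_idt (R I J : finType) (f : Op C I -> Op C J) (X : Op C (R * I)) p q :
  opE (idtensor f X) p q = opE (f (blk X p.1 q.1)) p.2 q.2.
Proof. by rewrite /idtensor opE_mkop. Qed.

Lemma idtensor_ext (R I J : finType) (f g : Op C I -> Op C J) (X : Op C (R * I)) :
  (forall Y, f Y = g Y) -> idtensor f X = idtensor g X.
Proof. by move=> H; apply: op_ext => p q; rewrite !opE_idt H. Qed.

Lemma blk_idt (R I J : finType) (f : Op C I -> Op C J) (X : Op C (R * I)) r r' :
  blk (idtensor f X) r r' = f (blk X r r').
Proof. by apply: op_ext => i j; rewrite opE_blk opE_idt. Qed.

Lemma idtensor_comp (R I J K : finType) (f : Op C J -> Op C K) (g : Op C I -> Op C J)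
  (X : Op C (R * I)) :
  idtensor (fun Y => f (g Y)) X = idtensor f (idtensor g X).
Proof. by apply: op_ext => p q; rewrite !opE_idt blk_idt. Qed.

Lemma sum_pair (I J : finType) (F : I * J -> C) :
  \sum_p F p = \sum_i \sum_j F (i, j).
Proof. by rewrite pair_bigA; apply: eq_bigr => -[]. Qed.

Lemma tr_idt (R I J : finType) (f : Op C I -> Op C J) (X : Op C (R * I)) :
  TP f -> \tr (idtensor f X) = \tr X.
Proof.
move=> tp; rewrite !trE !sum_pair.
apply: eq_bigr => r _; rewrite -[RHS](_ : \tr (blk X r r) = _); last first.
  by rewrite trE; apply: eq_bigr => i _; rewrite opE_blk.
by rewrite -tp trE; apply: eq_bigr => j _; rewrite opE_idt.
Qed.

Lemma ptB_K (IA IB : finType) (X : Op C (IA * IB)) : ptB (ptB X) = X.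
Proof. by apply: op_ext => p q; rewrite /ptB !opE_mkop /=; case: p; case: q. Qed.

Lemma opE_ptB (IA IB : finType) (X : Op C (IA * IB)) p q :
  opE (ptB X) p q = opE X (p.1, q.2) (q.1, p.2).
Proof. exact: opE_mkop. Qed.


Lemma applyM_ptB (hA' hB' hA hB AM BM : finType)
  (M : Op C (hA' * hB') -> Op C (hA * hB)) (Y : Op C ((hA' * AM) * (hB' * BM))) :
  ptB (applyM (fun X => ptB (M (ptB X))) (ptB Y)) = applyM M Y.
Proof.
apply: op_ext => -[[am a] [b bm]] [[am' a'] [b' bm']].
rewrite opE_ptB /applyM !opE_mkop /=.
congr (opE (M _) _ _); apply: op_ext => x y.
by rewrite !(opE_ptB, opE_mkop).
Qed.

Definition qf (I : finType) (X : Op C I) (u : I -> C) :=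
  \sum_i \sum_j (u i)^* * opE X i j * u j.

Lemma qfE (I : finType) (X : Op C I) (v : 'cV[C]_#|I|) :
  (adj v *m X *m v) 0 0 = qf X (fun i => v (enum_rank i) 0).
Proof.
rewrite /qf mxE; under eq_bigr do rewrite mxE mulr_suml.
rewrite exchange_big -[RHS]big_ordI; apply: eq_bigr => l _.
rewrite -[RHS]big_ordI; apply: eq_bigr => k _.
by rewrite /opE !mxE !enum_valK.
Qed.

Lemma psdP (I : finType) (X : Op C I) : psd X <-> forall u, 0 <= qf X u.
Proof.
split=> [H u|H v]; last by rewrite qfE.
have := H (\col_k u (enum_val k)); rewrite qfE.
by congr (0 <= _); rewrite /qf; apply: eq_bigr=> i _; apply: eq_bigr=> j _; rewrite !mxE !enum_rankK.
Qed.



Lemma char_poly_conj n (P D : 'M[C]_n) : P \in unitmx ->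
  char_poly (invmx P *m D *m P) = char_poly D.
Proof.
move=> Pu; rewrite /char_poly /char_poly_mx.
have -> : 'X%:M - map_mx polyC (invmx P *m D *m P) =
   map_mx polyC (invmx P) *m ('X%:M - map_mx polyC D) *m map_mx polyC P.
  rewrite !map_mxM mulmxBr mulmxBl mul_mx_scalar -scalemxAl -[X in _ *: X]map_mxM mulVmx //.
  by rewrite map_mx1 scalemx1.
by rewrite !det_mulmx !det_map_mx mulrC mulrA -rmorphM -det_mulmx mulmxV // det1 rmorph1 mul1r.
Qed.


Lemma eigvals_conj n (P : 'M[C]_n) (e : 'rV[C]_n) : P \in unitmx ->
  perm_eq (eigvals (invmx P *m diag_mx e *m P)) [seq e 0 i | i <- enum 'I_n].
Proof.
move=> Pu; rewrite /eigvals; case: closed_field_poly_normal => r /= Hr.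
rewrite char_poly_conj // char_poly_trig ?diag_mx_is_trig // in Hr.
have := monic_prod_XsubC (index_enum 'I_n) xpredT (fun i => diag_mx e i i).
move/monicP => Hl; rewrite Hl scale1r in Hr.
apply: prod_XsubC_eq; rewrite -Hr big_map big_enum /=.
by apply: eq_bigr => i _; rewrite mxE eqxx mulr1n.
Qed.


Lemma adj_herm n (Z : 'M[C]_n) : Z \is hermsymmx -> adj Z = Z.
Proof.
rewrite qualifE expr0 scale1r => /eqP {2}->.
by apply/matrixP => i j; rewrite !mxE.
Qed.

Lemma tnorm_herm n (Z : 'M[C]_n) : Z \is hermsymmx ->
  tnorm Z = \sum_i `|spectral_diag Z 0 i|.
Proof.
move=> Zh; have /orthomx_spectralP EZ := hermitian_normalmx Zh.
have dR := hermitian_spectral_diag_real Zh.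
set P := spectralmx Z in EZ; set d := spectral_diag Z in EZ dR *.
have Pu : P \in unitmx by apply: spectral_unit.
have ZZ : adj Z *m Z = invmx P *m diag_mx (\row_j (d 0 j * d 0 j)) *m P.
  rewrite adj_herm // {1 2}EZ -!mulmxA; congr (_ *m _).
  by rewrite !mulmxA mulmxK // mulmx_diag.
rewrite /tnorm ZZ (perm_big _ (eigvals_conj _ Pu)) big_map big_enum /=.
apply: eq_bigr => i _; rewrite mxE -expr2 -real_normK ?sqrCK //.
by apply: (mxOverP dR).
Qed.


Lemma adjD m n (X Y : 'M[C]_(m, n)) : adj (X + Y) = adj X + adj Y.
Proof. by apply/matrixP => i j; rewrite !mxE rmorphD. Qed.
Lemma adjZ m n (c : C) (X : 'M[C]_(m, n)) : adj (c *: X) = c^* *: adj X.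
Proof. by apply/matrixP => i j; rewrite !mxE rmorphM. Qed.

Definition smx n (X : 'M[C]_n) (u w : 'cV[C]_n) := (adj u *m X *m w) 0 0.

Lemma smxDl n (X : 'M[C]_n) u v w : smx X (u + v) w = smx X u w + smx X v w.
Proof. by rewrite /smx adjD !mulmxDl mxE. Qed.
Lemma smxDr n (X : 'M[C]_n) u v w : smx X u (v + w) = smx X u v + smx X u w.
Proof. by rewrite /smx mulmxDr mxE. Qed.
Lemma smxZl n (X : 'M[C]_n) c u w : smx X (c *: u) w = c^* * smx X u w.
Proof. by rewrite /smx adjZ -!scalemxAl mxE. Qed.
Lemma smxZr n (X : 'M[C]_n) c u w : smx X u (c *: w) = c * smx X u w.
Proof. by rewrite /smx -!scalemxAr mxE. Qed.

Lemma smx_delta n (X : 'M[C]_n) i j : smx X (delta_mx i 0) (delta_mx j 0) = X i j.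
Proof.
rewrite /smx mxE (bigD1 j) //= big1 ?addr0; last first.
  by move=> k /negPf kj; rewrite !mxE kj mulr0.
rewrite !mxE eqxx mulr1 (bigD1 i) //= big1 ?addr0; last first.
  by move=> k /negPf ki; rewrite !mxE ki rmorph0 mul0r.
by rewrite !mxE eqxx /= rmorph1 mul1r.
Qed.

Lemma psd_smx_conj n (X : 'M[C]_n) u w : psd X -> smx X w u = (smx X u w)^*.
Proof.
move=> H.
have R v : (smx X v v)^* = smx X v v by apply/conj_Creal/ger0_real/H.
set a := smx X u w; set b := smx X w u.
have E1 : a^* + b^* = a + b.
  have := R (u + w); rewrite smxDl !smxDr !rmorphD /= !R.
  move=> HH; apply/(addrI (smx X u u))/(addIr (smx X w w)); by rewrite -/a -/b !addrA in HH *.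
have E2 : 'i * (b^* - a^*) = 'i * (a - b).
  have := R (u + 'i *: w); rewrite smxDl !smxDr smxZl !smxZr smxZl !rmorphD /= !R.
  have ii : 'i * 'i^* = 1 :> C by rewrite conjCi mulrN -expr2 sqrCi opprK.
  rewrite mulrA ii mul1r R !rmorphM /= conjCK conjCi => HH.
  have HH2 : - 'i * a^* + 'i * b^* = 'i * a + - 'i * b.
    apply/(addrI (smx X u u))/(addIr (smx X w w)); by rewrite -/a -/b !addrA in HH *.
  by rewrite !mulrBr addrC -mulNr HH2 mulNr.
have E3 : b^* - a^* = a - b := mulfI (@neq0Ci C) E2.
have : (b - a^*) *+ 2 = 0.
  rewrite mulr2n.
  have -> : b - a^* + (b - a^*) = (a + b - (a^* + b^*)) + ((b^* - a^*) - (a - b)) by ring.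
  by rewrite E1 E3 !subrr addr0.
move/eqP; rewrite mulrn_eq0 /= subr_eq0 => /eqP //.
Qed.

Lemma psd_adj n (X : 'M[C]_n) : psd X -> adj X = X.
Proof.
move=> H; apply/matrixP => i j; rewrite !mxE -smx_delta (psd_smx_conj _ _ H).
by rewrite smx_delta conjCK.
Qed.

Lemma adj_hermsym n (X : 'M[C]_n) : adj X = X -> X \is hermsymmx.
Proof.
move=> H; rewrite qualifE expr0 scale1r; apply/eqP; rewrite -{1}H.
by apply/matrixP => i j; rewrite !mxE.
Qed.

Lemma adjB m n (X Y : 'M[C]_(m, n)) : adj (X - Y) = adj X - adj Y.
Proof. by apply/matrixP => i j; rewrite !mxE rmorphB. Qed.

Lemma tnorm_psd_diff n (A B : 'M[C]_n) : psd A -> psd B ->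
  tnorm (A - B) <= \tr A + \tr B.
Proof.
move=> pA pB.
have Zh : (A - B) \is hermsymmx.
  by apply: adj_hermsym; rewrite adjB !psd_adj.
rewrite tnorm_herm //.
have /orthomx_spectralP EZ := hermitian_normalmx Zh.
set P := spectralmx (A - B) in EZ; set d := spectral_diag (A - B) in EZ *.
have Pu : P \in unitmx by apply: spectral_unit.
have PU : P \is unitarymx by apply: spectral_unitarymx.
have dE i : d 0 i = (P *m A *m invmx P) i i - (P *m B *m invmx P) i i.
  have : P *m (A - B) *m invmx P = diag_mx d.
    by rewrite {1}EZ !mulmxA mulmxV // mul1mx mulmxK.
  have sub_ii (X Y : 'M[C]_n) : (X - Y) i i = X i i - Y i i by rewrite !mxE.
  move/matrixP/(_ i i); rewrite mulmxBr mulmxBl sub_ii => ->.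
  by rewrite mxE eqxx mulr1n.
have dge0 X i : psd X -> 0 <= (P *m X *m invmx P) i i.
  move=> pX; rewrite invmx_unitary //.
  set w : 'cV[C]_n := \col_k (P i k)^*.
  have -> : (P *m X *m P^t*) i i = (adj w *m X *m w) 0 0.
    rewrite !mxE; apply: eq_bigr => k _; rewrite !mxE; congr (_ * _).
    by apply: eq_bigr => l _; rewrite !mxE conjCK.
  exact: pX.
have trE X : \sum_i (P *m X *m invmx P) i i = \tr X.
  by rewrite -/(\tr _) mxtrace_mulC mulmxA mulVmx // mul1mx.
under eq_bigr do rewrite dE.
apply: le_trans (ler_sum _ (fun i _ => ler_normB _ _)) _.
rewrite big_split /= -(trE A) -(trE B); apply: lerD; apply: ler_sum => i _;
  by rewrite ger0_norm // dge0.
Qed.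


Lemma opE_add (I : finType) (X Y : Op C I) i j : opE (X + Y) i j = opE X i j + opE Y i j.
Proof. by rewrite /opE mxE. Qed.
Lemma opE_opp (I : finType) (X : Op C I) i j : opE (- X) i j = - opE X i j.
Proof. by rewrite /opE mxE. Qed.
Lemma opE_sub (I : finType) (X Y : Op C I) i j : opE (X - Y) i j = opE X i j - opE Y i j.
Proof. by rewrite opE_add opE_opp. Qed.
Lemma opE_sum (I : finType) (J : finType) (F : J -> Op C I) i j :
  opE (\sum_k F k) i j = \sum_k opE (F k) i j.
Proof. by rewrite /opE summxE. Qed.
Lemma opE_adj (I : finType) (X : Op C I) i j : opE (adj X) i j = (opE X j i)^*.
Proof. by rewrite /opE !mxE. Qed.

Section Lin.
Variables (I J : finType) (f : Op C I -> Op C J).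
Hypothesis lf : linear f.
Lemma linB X Y : f (X - Y) = f X - f Y.
Proof. exact: zmod_morphism_linear lf X Y. Qed.
Lemma lin0 : f 0 = 0.
Proof. by rewrite -(subrr 0) linB subrr. Qed.
Lemma linN X : f (- X) = - f X.
Proof. by rewrite -sub0r linB lin0 sub0r. Qed.
Lemma linD X Y : f (X + Y) = f X + f Y.
Proof. by rewrite -{1}[Y]opprK linB linN opprK. Qed.
Lemma linsum (K : finType) (F : K -> Op C I) : f (\sum_k F k) = \sum_k f (F k).
Proof. by apply: (big_morph f linD lin0). Qed.
End Lin.

Lemma blkB (R I : finType) (X Y : Op C (R * I)) r r' :
  blk (X - Y) r r' = blk X r r' - blk Y r r'.
Proof. by apply: op_ext => i j; rewrite opE_sub !opE_blk opE_sub. Qed.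

Lemma idtB (R I J : finType) (f : Op C I -> Op C J) (X Y : Op C (R * I)) :
  linear f -> idtensor f (X - Y) = idtensor f X - idtensor f Y.
Proof. by move=> lf; apply: op_ext => p q; rewrite opE_sub !opE_idt blkB linB // opE_sub. Qed.

Lemma adj_mul m n p (X : 'M[C]_(m, n)) (Y : 'M[C]_(n, p)) : adj (X *m Y) = adj Y *m adj X.
Proof. by rewrite /adj map_mxM trmx_mul. Qed.
Lemma adjK m n (X : 'M[C]_(m, n)) : adj (adj X) = X.
Proof. by apply/matrixP => i j; rewrite !mxE conjCK. Qed.

Lemma psd_conj_diag n (P : 'M[C]_n) (e : 'rV[C]_n) : P \is unitarymx ->
  (forall i, 0 <= e 0 i) -> psd (invmx P *m diag_mx e *m P).
Proof.
move=> PU he v; rewrite invmx_unitary //.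
have -> : P^t* = adj P by apply/matrixP => i j; rewrite !mxE.
rewrite !mulmxA -adj_mul -!mulmxA mulmxA; set w := P *m v.
rewrite mxE; apply: sumr_ge0 => i _; rewrite mul_mx_diag !mxE.
by rewrite mulrAC mulr_ge0 // mulrC mul_conjC_ge0.
Qed.

Lemma tr_conj_diag n (P : 'M[C]_n) (e : 'rV[C]_n) : P \in unitmx ->
  \tr (invmx P *m diag_mx e *m P) = \sum_i e 0 i.
Proof. by move=> Pu; rewrite mxtrace_mulC mulmxA mulmxV // mul1mx mxtrace_diag. Qed.

Lemma half_add (x y : C) : (x + y) / 2 + (x - y) / 2 = x.
Proof. by field. Qed.
Lemma half_sub (x y : C) : (x + y) / 2 - (x - y) / 2 = y.
Proof. by field. Qed.

Lemma herm_split n (X : 'M[C]_n) : adj X = X ->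
  exists Xp Xm, [/\ psd Xp, psd Xm, X = Xp - Xm & tnorm X = \tr Xp + \tr Xm].
Proof.
move=> Xa; have Xh := adj_hermsym Xa.
have /orthomx_spectralP EX := hermitian_normalmx Xh.
have dR := hermitian_spectral_diag_real Xh.
rewrite tnorm_herm //.
set P := spectralmx X in EX; set d := spectral_diag X in EX dR *.
have Pu : P \in unitmx by apply: spectral_unit.
have PU : P \is unitarymx by apply: spectral_unitarymx.
have dRi i : d 0 i \is Num.real by apply: (mxOverP dR).
have two0 : (2 : C) != 0 by rewrite pnatr_eq0.
pose dp := \row_i ((`|d 0 i| + d 0 i) / 2).
pose dm := \row_i ((`|d 0 i| - d 0 i) / 2).
exists (invmx P *m diag_mx dp *m P), (invmx P *m diag_mx dm *m P); split.
- apply: psd_conj_diag => // i; rewrite mxE divr_ge0 ?ler0n //.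
  by rewrite -lerBlDr sub0r -normrN real_ler_norm ?rpredN.
- apply: psd_conj_diag => // i; rewrite mxE divr_ge0 ?ler0n //.
  by rewrite subr_ge0 real_ler_norm.
- rewrite -mulmxBl -mulmxBr {1}EX; congr (_ *m _ *m _).
  apply/matrixP => i j; rewrite !mxE -mulrnBl; congr (_ *+ _).
  by rewrite half_sub.
- rewrite !tr_conj_diag // -big_split; apply: eq_bigr => i _; rewrite !mxE.
  rewrite [RHS](_ : _ = (`|d 0 i| + d 0 i) / 2 + (`|d 0 i| - d 0 i) / 2) //.
  by rewrite half_add.
Qed.

Lemma idt_herm (R I J : finType) (f : Op C I -> Op C J) (X : Op C (R * I)) :
  linear f -> CP f -> adj X = X -> adj (idtensor f X) = idtensor f X.
Proof.
move=> lf cf /herm_split [Xp [Xm [pp pm -> _]]].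
by rewrite idtB // adjB !psd_adj //; apply: cf.
Qed.

Definition ptR (R IA IB : finType) (X : Op C (R * (IA * IB))) : Op C (R * (IA * IB)) :=
  mkop (fun p q => opE X (p.1, (p.2.1, q.2.2)) (q.1, (q.2.1, p.2.2))).

Lemma idt_ptB (R IA IB JA JB : finType) (f : Op C (IA * IB) -> Op C (JA * JB))
  (X : Op C (R * (IA * IB))) :
  idtensor (fun Y => ptB (f (ptB Y))) X = ptR (idtensor f (ptR X)).
Proof.
apply: op_ext => p q; rewrite !opE_idt opE_ptB /ptR opE_mkop opE_idt /=.
congr (opE (f _) _ _); apply: op_ext => i j.
by rewrite opE_ptB !opE_blk !opE_mkop.
Qed.

Lemma ptR_herm (R IA IB : finType) (X : Op C (R * (IA * IB))) :
  adj X = X -> adj (ptR X) = ptR X.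
Proof.
move=> H; apply: op_ext => p q; rewrite opE_adj /ptR !opE_mkop.
by rewrite -{2}H opE_adj.
Qed.

Lemma psd_vv n (v : 'cV[C]_n) : psd (v *m adj v).
Proof.
move=> w; have -> : adj w *m (v *m adj v) *m w = (adj w *m v) *m (adj v *m w).
  by rewrite !mulmxA.
set c := adj w *m v.
have -> : adj v *m w = adj c by rewrite /c adj_mul adjK.
by rewrite mxE big_ord1 /adj !mxE mul_conjC_ge0.
Qed.

Lemma psd_diag_ge0 n (X P : 'M[C]_n) i : P \is unitarymx -> psd X ->
  0 <= (P *m X *m invmx P) i i.
Proof.
move=> PU pX; rewrite invmx_unitary //.
set w : 'cV[C]_n := \col_k (P i k)^*.
have -> : (P *m X *m P^t*) i i = (adj w *m X *m w) 0 0.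
  rewrite !mxE; apply: eq_bigr => k _; rewrite !mxE; congr (_ * _).
  by apply: eq_bigr => l _; rewrite !mxE conjCK.
exact: pX.
Qed.

Lemma psd_factor n (X : 'M[C]_n) : psd X -> exists G : 'M[C]_n, X = G *m adj G.
Proof.
move=> pX; have Xh := adj_hermsym (psd_adj pX).
have /orthomx_spectralP EX := hermitian_normalmx Xh.
set P := spectralmx X in EX; set d := spectral_diag X in EX *.
have Pu : P \in unitmx by apply: spectral_unit.
have PU : P \is unitarymx by apply: spectral_unitarymx.
have dge0 i : 0 <= d 0 i.
  have := psd_diag_ge0 i PU pX; congr (0 <= _).
  by rewrite {1}EX !mulmxA mulmxV // mul1mx mulmxK // mxE eqxx mulr1n.
pose s := \row_i sqrtC (d 0 i).
exists (invmx P *m diag_mx s); rewrite adj_mul -mulmxA (mulmxA (diag_mx s)).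
have -> : adj (diag_mx s) = diag_mx s.
  apply/matrixP => i j; rewrite /adj !mxE.
  case: (eqVneq i j) => [->|/negPf ij]; last by rewrite !mulr0n rmorph0.
  by rewrite !mulr1n conj_Creal // sqrtC_real.
have -> : adj (invmx P) = P.
  by rewrite invmx_unitary //; apply/matrixP => i j; rewrite /adj !mxE conjCK.
rewrite mulmx_diag !mulmxA {1}EX; congr (_ *m diag_mx _ *m _).
by apply/rowP => i; rewrite !mxE -expr2 sqrtCK.
Qed.

Lemma sum_bij (I J : finType) (h : J -> I) (g : I -> J) :
  cancel h g -> cancel g h -> forall F : I -> C, \sum_i F i = \sum_j F (h j).
Proof.
move=> hg gh F; rewrite (reindex h) //; exists g => x _; [exact: hg | exact: gh].
Qed.

Lemma sum_delta (I : finType) (i : I) (F : I -> C) :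
  \sum_k (k == i)%:R * F k = F i.
Proof.
rewrite (bigD1 i) //= eqxx mul1r big1 ?addr0 // => k /negPf ->; by rewrite mul0r.
Qed.

Lemma opE_scale (I : finType) (a : C) (X : Op C I) i j : opE (a *: X) i j = a * opE X i j.
Proof. by rewrite /opE mxE. Qed.

Lemma ptB_tr (IA IB : finType) (X : Op C (IA * IB)) : \tr (ptB X) = \tr X.
Proof. by rewrite !trE; apply: eq_bigr => -[a b]; rewrite opE_ptB. Qed.

Lemma ptB_lin (IA IB : finType) (a : C) (X Y : Op C (IA * IB)) :
  ptB (a *: X + Y) = a *: ptB X + ptB Y.
Proof. by apply: op_ext => p q; rewrite !(opE_ptB, opE_add, opE_scale). Qed.

Lemma conj_ptB_lin (IA IB JA JB : finType) (f : Op C (IA * IB) -> Op C (JA * JB)) :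
  linear f -> linear (fun X => ptB (f (ptB X))).
Proof. by move=> lf a X Y; rewrite /= ptB_lin lf ptB_lin. Qed.

Lemma conj_ptB_TP (IA IB JA JB : finType) (f : Op C (IA * IB) -> Op C (JA * JB)) :
  TP f -> TP (fun X => ptB (f (ptB X))).
Proof. by move=> tf X; rewrite /= ptB_tr tf ptB_tr. Qed.

Section Tk.
Variables (K R AM hA hB BM : finType).
Local Notation Z := (((K * R) * (AM * BM)) * (hA * hB))%type.
Local Notation P := (R * ((AM * hA) * (hB * BM)))%type.

Definition hk (k : K) (p : P) : Z :=
  (((k, p.1), (p.2.1.1, p.2.2.2)), (p.2.1.2, p.2.2.1)).
Definition hkinv (z : Z) : K * P :=
  (z.1.1.1, (z.1.1.2, ((z.1.2.1, z.2.1), (z.2.2, z.1.2.2)))).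
Lemma hk_can w : hkinv (hk w.1 w.2) = w.
Proof. by case: w => k [r [[am a] [b bm]]]. Qed.
Lemma hk_can2 z : hk (hkinv z).1 (hkinv z).2 = z.
Proof. by case: z => [[[k r] [am bm]] [a b]]. Qed.

Lemma sum_hk (F : Z -> C) : \sum_z F z = \sum_k \sum_p F (hk k p).
Proof.
rewrite (@sum_bij _ _ (fun w => hk w.1 w.2) hkinv); last first.
- exact: hk_can2.
- exact: hk_can.
by rewrite sum_pair.
Qed.

Lemma sum_hk_delta (k : K) (F : Z -> C) :
  \sum_z (z.1.1.1 == k)%:R * F z = \sum_p F (hk k p).
Proof.
rewrite sum_hk (eq_bigr (fun k1 => (k1 == k)%:R * \sum_p F (hk k1 p))).
  by rewrite sum_delta.
by move=> k1 _; rewrite mulr_sumr.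
Qed.

Definition Tk (Y : Op C Z) : Op C P :=
  mkop (fun p q => \sum_k opE Y (hk k p) (hk k q)).

Lemma TkB (X Y : Op C Z) : Tk (X - Y) = Tk X - Tk Y.
Proof.
apply: op_ext => p q; rewrite opE_sub !opE_mkop -sumrB.
by apply: eq_bigr => k _; rewrite opE_sub.
Qed.

Lemma Tk_tr (Y : Op C Z) : \tr (Tk Y) = \tr Y.
Proof.
rewrite !trE sum_hk exchange_big; apply: eq_bigr => p _.
by rewrite opE_mkop.
Qed.

Lemma Tk_psd (Y : Op C Z) : psd Y -> psd (Tk Y).
Proof.
move=> /psdP pY; apply/psdP => u.
pose u' k (z : Z) := (z.1.1.1 == k)%:R * u (hkinv z).2.
have Ek k : qf Y (u' k) =
    \sum_p \sum_q (u p)^* * opE Y (hk k p) (hk k q) * u q.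
  rewrite /qf /u'.
  under eq_bigr => z _.
    under eq_bigr => z' _ do rewrite rmorphM rmorph_nat -!mulrA.
    rewrite -mulr_sumr.
  over.
  rewrite sum_hk_delta; apply: eq_bigr => p _.
  have hp : (hkinv (hk k p)).2 = p by rewrite (hk_can (k, p)).
  under eq_bigr => z' _ do rewrite hp mulrCA mulrA [_ * _ * (_ * _)]mulrCA.
  rewrite sum_hk_delta; apply: eq_bigr => q _.
  have hq : (hkinv (hk k q)).2 = q by rewrite (hk_can (k, q)).
  by rewrite hq [_ * (u p)^*]mulrC.
have E : qf (Tk Y) u = \sum_k qf Y (u' k).
  under [RHS]eq_bigr do rewrite Ek.
  rewrite exchange_big /qf; apply: eq_bigr => p _.
  rewrite exchange_big; apply: eq_bigr => q _.
  by rewrite opE_mkop mulr_sumr mulr_suml.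
rewrite E; apply: sumr_ge0 => k _; exact: pY.
Qed.

End Tk.

Section Purif.
Variables (R hA' hB' AM BM : finType).
Local Notation T0 := ((hA' * AM) * (hB' * BM))%type.
Local Notation Y0 := (R * T0)%type.
Local Notation K := ('I_#|{: Y0}|)%type.
Local Notation Z := (((K * R) * (AM * BM)) * (hA' * hB'))%type.

Definition sw (p : R * ((AM * hA') * (hB' * BM))) : Y0 :=
  (p.1, ((p.2.1.2, p.2.1.1), (p.2.2.1, p.2.2.2))).
Definition swinv (y : Y0) : R * ((AM * hA') * (hB' * BM)) :=
  (y.1, ((y.2.1.2, y.2.1.1), (y.2.2.1, y.2.2.2))).
Lemma sw_can : cancel sw swinv. Proof. by case=> r [[am a] [b bm]]. Qed.
Lemma sw_can2 : cancel swinv sw. Proof. by case=> r [[a am] [b bm]]. Qed.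

Definition psi (G : Op C Y0) (z : Z) : C :=
  G (enum_rank (z.1.1.2, ((z.2.1, z.1.2.1), (z.2.2, z.1.2.2)))) z.1.1.1.

Definition Psi (G : Op C Y0) : 'cV[C]_#|{: Z}| := \col_x psi G (enum_val x).

Lemma opE_GG (G : Op C Y0) y y' :
  opE (G *m adj G) y y' = \sum_k G (enum_rank y) k * (G (enum_rank y') k)^*.
Proof. by rewrite /opE mxE; apply: eq_bigr => k _; rewrite /adj !mxE. Qed.

Lemma opE_PsiPsi (G : Op C Y0) z z' :
  opE (Psi G *m adj (Psi G)) z z' = psi G z * (psi G z')^*.
Proof. by rewrite /opE mxE big_ord1 /adj !mxE !enum_rankK. Qed.

Lemma Psi_norm (G : Op C Y0) : \tr (G *m adj G) = 1 -> adj (Psi G) *m Psi G = 1%:M.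
Proof.
move=> H; apply/matrixP => i j; rewrite !ord1 mxE [RHS]mxE /= mulr1n -H.
rewrite trE.
transitivity (\sum_z (psi G z)^* * psi G z).
  rewrite -[RHS]big_ordI; apply: eq_bigr => x _; by rewrite /adj !mxE.
rewrite sum_hk exchange_big.
transitivity (\sum_y \sum_k (G (enum_rank y) k)^* * G (enum_rank y) k); last first.
  by apply: eq_bigr => y _; rewrite opE_GG; apply: eq_bigr => k _; rewrite mulrC.
rewrite (sum_bij sw_can2 sw_can); apply: eq_bigr => p _.
by case: p => r [[a am] [b bm]].
Qed.

Lemma key_identity (hA hB : finType) (N : Op C (hA' * hB') -> Op C (hA * hB))
  (G : Op C Y0) : linear N ->
  idtensor (applyM N) (G *m adj G) = Tk (idtensor N (Psi G *m adj (Psi G))).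
Proof.
move=> lN; apply: op_ext => -[r [[am a] [b bm]]] [r' [[am' a'] [b' bm']]].
rewrite opE_idt /= /applyM opE_mkop /= /Tk opE_mkop.
under eq_bigr do rewrite opE_idt /hk /=.
rewrite -opE_sum -linsum //; congr (opE (N _) _ _); apply: op_ext => x y.
rewrite opE_sum opE_mkop opE_blk opE_GG; apply: eq_bigr => k _.
by rewrite opE_blk opE_PsiPsi.
Qed.

End Purif.

End Main.

Theorem mainTheorem4 (C : numClosedFieldType)
    (A' B' hA' hB' AM BM hA hB A B : finType)
    (M : Op C (hA' * hB') -> Op C (hA * hB))
    (Ppre : Op C (A' * B') -> Op C ((hA' * AM) * (hB' * BM)))
    (Ppost : Op C ((AM * hA) * (hB * BM)) -> Op C (A * B)) :
  channel M -> PPTchannel Ppre -> PPTchannel Ppost ->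
  EN_le (superchannel Ppre Ppost M) M.
Proof.
move=> [lM [cM tM]] [[lPre [cPre tPre]] cQ1] [[lPost [cPost tPost]] cQ2] b Hb R v Hv.
pose N := fun X => ptB (M (ptB X)).
pose Q1 := fun X => ptB (Ppre (ptB X)).
pose Q2 := fun X => ptB (Ppost (ptB X)).
have lQ2 : linear Q2 := conj_ptB_lin lPost.
have tQ2 : TP Q2 := conj_ptB_TP tPost.
have tQ1 : TP Q1 := conj_ptB_TP tPre.
have lN : linear N := conj_ptB_lin lM.
have E1 : idtensor (fun X => ptB (superchannel Ppre Ppost M (ptB X))) (v *m adj v) =
    idtensor Q2 (idtensor (applyM N) (idtensor Q1 (v *m adj v))).
  rewrite -idtensor_comp -idtensor_comp; apply: idtensor_ext => X.
  by rewrite /superchannel /Q2 /Q1 /N applyM_ptB.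
set rho := idtensor Q1 (v *m adj v) in E1.
have prho : psd rho by apply: cQ1; apply: psd_vv.
have trrho : \tr rho = 1.
  by rewrite /rho tr_idt // mxtrace_mulC Hv mxtrace1.
have [G EG] := psd_factor prho.
have HW := Hb _ (Psi G) (Psi_norm (G := G) (esym (etrans (esym trrho) (congr1 _ EG)))).
set W := idtensor _ (Psi G *m adj (Psi G)) in HW.
have Wh : adj W = W.
  rewrite /W idt_ptB; apply: ptR_herm; apply: idt_herm => //.
  by apply: ptR_herm; apply: psd_adj; apply: psd_vv.
have [Xp [Xm [pp pm EW tW]]] := herm_split Wh.
rewrite E1 EG key_identity // -/W EW TkB idtB //.
apply: le_trans (tnorm_psd_diff _ _) _; try by apply: cQ2; apply: Tk_psd.
by rewrite !tr_idt // !Tk_tr -tW.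
Qed.
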